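(* For every $\varepsilon>0$ there exists $N$ such that for all $n\ge N$, every vector trifferent code $\mathcal C\subseteq (S^2)^n$ of block length $n$ satisfies \[ |\mathcal C|\le (\sqrt2+\varepsilon)\left(\tfrac32\right)^n . \] That is, $|\mathcal C|\le(\sqrt2+o(1))(3/2)^n$ as $n\to\infty$.
   Context: $S^2=\{v\in\mathbb R^3:\|v\|=1\}$. Three points $x,y,z\in(S^2)^n$ (with coordinates $x_i,y_i,z_i\in S^2$) are vector trifferent if there is an index $i\in\{1,\dots,n\}$ such that $x_i,y_i,z_i$ are mutually orthogonal. A vector trifferent code of block length $n$ is a subset $\mathcal C\subseteq(S^2)^n$ such that any three distinct codewords $x,y,z\in\mathcal C$ are vector trifferent. *)

(* Defs.v *)
From Stdlib Require Import Reals List.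
From mathcomp Require Import ssreflect ssrbool eqtype ssrnat fintype.
Open Scope R_scope.

Definition R3 : Type := (R * R * R)%type.

Definition dot3 (u v : R3) : R :=
  let '(u1, u2, u3) := u in let '(v1, v2, v3) := v in u1 * v1 + u2 * v2 + u3 * v3.

Definition on_sphere (u : R3) : Prop := dot3 u u = 1.

Definition word (n : nat) : Type := 'I_n -> R3.
Definition in_sphere_pow (n : nat) (x : word n) : Prop := forall i, on_sphere (x i).

Definition mutually_orthogonal (a b c : R3) : Prop :=
  dot3 a b = 0 /\ dot3 a c = 0 /\ dot3 b c = 0.

Definition vector_trifferent (n : nat) (x y z : word n) : Prop :=
  exists i : 'I_n, mutually_orthogonal (x i) (y i) (z i).

Definition vector_trifferent_code (n : nat) (C : word n -> Prop) : Prop :=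
  (forall x, C x -> in_sphere_pow n x) /\
  (forall x y z, C x -> C y -> C z -> x <> y -> x <> z -> y <> z ->
     vector_trifferent n x y z).

(* Main.v *)
Require Import Defs.
From Stdlib Require Import Reals List.
From mathcomp Require Import ssreflect ssrbool eqtype ssrnat fintype.
Open Scope R_scope.
From Stdlib Require Import Lra.
From mathcomp Require Import all_boot all_order all_algebra.
From mathcomp Require Import Rstruct.
From mathcomp Require Import ring lra.
Import Order.TTheory GRing.Theory Num.Theory.
Local Open Scope ring_scope.

Section Coord.
Variable K : realFieldType.

Lemma sum3 (G : 'I_3 -> K) : \sum_(a < 3) G a = G ord0 + G (lift ord0 ord0) + G (lift ord0 (lift ord0 ord0)).
Proof. by rewrite !big_ord_recl big_ord0 addr0 addrA. Qed.
Lemma ord3P (a : 'I_3) : [\/ a = ord0, a = lift ord0 ord0 | a = lift ord0 (lift ord0 ord0)].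
Proof.
case: a => [[|[|[|?]]] ?] //; [constructor 1|constructor 2|constructor 3]; exact: val_inj.
Qed.

Definition dotv (u v : 'I_3 -> K) := \sum_(a < 3) u a * v a.
Definition pk (u : 'I_3 -> K) (a b : 'I_3) : K := (a == b)%:R - u a * u b.
Definition k3mul (F G : 'I_3 -> 'I_3 -> K) a c := \sum_(b < 3) F a b * G b c.
Definition tr3 (F : 'I_3 -> 'I_3 -> K) := \sum_(a < 3) F a a.

Lemma k3mul_pk u v a c : k3mul (pk u) (pk v) a c =
  (a == c)%:R - u a * u c - v a * v c + u a * dotv u v * v c.
Proof.
rewrite /k3mul sum3 /pk /dotv sum3.
by case: (ord3P a) => ->; case: (ord3P c) => -> /=; ring.
Qed.

Lemma k3mulE F G a c : k3mul F G a c =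
  F a ord0 * G ord0 c + F a (lift ord0 ord0) * G (lift ord0 ord0) c +
  F a (lift ord0 (lift ord0 ord0)) * G (lift ord0 (lift ord0 ord0)) c.
Proof. by rewrite /k3mul sum3. Qed.

Lemma pk_sym u a b : pk u a b = pk u b a.
Proof. by rewrite /pk eq_sym mulrC. Qed.

Lemma pk_idem u a c : dotv u u = 1 -> k3mul (pk u) (pk u) a c = pk u a c.
Proof. by move=> h; rewrite k3mul_pk h /pk; ring. Qed.

Lemma tr3_pk2 u v : tr3 (k3mul (pk u) (pk v)) =
  3 - dotv u u - dotv v v + dotv u v ^+ 2.
Proof.
rewrite /tr3 sum3 !k3mul_pk /dotv !sum3 /=; ring.
Qed.

Lemma tr3_pk3 u v w : tr3 (k3mul (k3mul (pk u) (pk v)) (pk w)) =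
  3 - dotv u u - dotv v v - dotv w w + dotv u v ^+ 2 + dotv v w ^+ 2
  + dotv u w ^+ 2 - dotv u v * dotv v w * dotv u w.
Proof.
rewrite /tr3 sum3 !(k3mulE (k3mul _ _)) !k3mul_pk /pk /dotv !sum3 /=; ring.
Qed.

End Coord.
Arguments dotv {K}.
Arguments pk {K}.
Arguments k3mul {K}.
Arguments tr3 {K}.

Section SOS.
Variable K : realFieldType.

Lemma tr_AAt k (A : 'M[K]_k) : 0 <= \tr (A *m A^T).
Proof.
rewrite /mxtrace; apply: sumr_ge0 => i _; rewrite mxE.
apply: sumr_ge0 => j _; rewrite mxE; rewrite -expr2; exact: sqr_ge0.
Qed.

Variables (k m : nat) (P : 'I_m -> 'M[K]_k).
Hypothesis sym : forall i, (P i)^T = P i.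
Hypothesis idem : forall i, P i *m P i = P i.
Hypothesis van : forall i j l, i != j -> i != l -> j != l ->
  \tr (P i *m P j *m P l) = 0.

Let M := \sum_i P i.
Let t1 := \sum_i \tr (P i).
Let D := \sum_i \sum_(j | j != i) \tr (P i *m P j).

Lemma trMM : \tr (M *m M) = t1 + D.
Proof.
rewrite /M mulmx_suml raddf_sum /t1 /D -big_split /=; apply: eq_bigr => i _.
rewrite mulmx_sumr raddf_sum (bigD1 i) //= idem; congr (_ + _); exact: eq_bigr.
Qed.

Lemma trPPM i j : \tr (P i *m (P j *m M)) = \sum_l \tr (P i *m P j *m P l).
Proof. by rewrite /M !mulmx_sumr raddf_sum; apply: eq_bigr => l _; rewrite mulmxA. Qed.

Lemma trPMM i : \tr (P i *m (M *m M)) = \sum_j \sum_l \tr (P i *m P j *m P l).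
Proof.
rewrite {1}/M mulmx_suml mulmx_sumr raddf_sum; apply: eq_bigr => j _; exact: trPPM.
Qed.

Lemma trMMM : \tr (M *m M *m M) = t1 + 3 * D.
Proof.
have -> : \tr (M *m M *m M) = \sum_i \tr (P i *m (M *m M)).
  by rewrite -mulmxA {1}/M mulmx_suml raddf_sum.
rewrite /t1 /D mulr_sumr -big_split /=; apply: eq_bigr => i _.
rewrite trPMM (bigD1 i) //=.
have -> : \sum_l \tr (P i *m P i *m P l) = \tr (P i) + \sum_(l | l != i) \tr (P i *m P l).
  by rewrite (bigD1 i) //= idem idem; congr (_ + _); apply: eq_bigr => l _; rewrite idem.
have -> : \sum_(j | j != i) \sum_l \tr (P i *m P j *m P l)
    = \sum_(j | j != i) (2 * \tr (P i *m P j)).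
  apply: eq_bigr => j ji; rewrite (bigD1 i) //= (bigD1 j) /=; last by rewrite ji.
  rewrite big1 ?addr0; last first.
    by move=> l /andP[li lj]; apply: van; rewrite // eq_sym.
  have -> : \tr (P i *m P j *m P j) = \tr (P i *m P j) by rewrite -mulmxA idem.
  have -> : \tr (P i *m P j *m P i) = \tr (P i *m P j) by rewrite mxtrace_mulC mulmxA idem.
  ring.
rewrite -mulr_sumr; ring.
Qed.

Lemma sos : D <= 2 * k%:R.
Proof.
set B := M - 2%:M.
have BT : B^T = B.
  by rewrite /B raddfB /= tr_scalar_mx /M raddf_sum /=; under eq_bigr do rewrite sym.
have h1 := @tr_AAt k B; rewrite BT in h1.
have h2 : 0 <= \sum_i \tr ((P i *m B) *m (P i *m B)^T).
  by apply: sumr_ge0 => i _; exact: tr_AAt.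
have e2 : \sum_i \tr ((P i *m B) *m (P i *m B)^T) = \tr (M *m (B *m B)).
  rewrite /M mulmx_suml raddf_sum; apply: eq_bigr => i _.
  by rewrite trmx_mul BT sym mulmxA [LHS]mxtrace_mulC !mulmxA -(mulmxA B (P i) (P i)) idem -(mulmxA B (P i) B) [LHS]mxtrace_mulC.
have trM : \tr M = t1 by rewrite /M raddf_sum.
have eBB : B *m B = M *m M - 2 *: M - (2 *: M - 2 *: 2%:M).
  by rewrite /B mulmxBl !mulmxBr !mul_mx_scalar mul_scalar_mx.
rewrite e2 eBB in h2; rewrite eBB in h1.
move: h1 h2; rewrite !mulmxBr -!scalemxAr mul_mx_scalar mulmxA !raddfB /= !mxtraceZ
  mxtrace_scalar trMM trMMM trM.
rewrite -mulr_natr; lra.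
Qed.
End SOS.

Section Tensor.
Variable K : realFieldType.
Variable n : nat.
Local Notation F := {ffun 'I_n -> 'I_3}.

Definition PKf (f : 'I_n -> 'I_3 -> 'I_3 -> K) (a b : F) : K := \prod_t f t (a t) (b t).
Definition Mk f : 'M[K]_#|{: F}| := \matrix_(i, j) PKf f (enum_val i) (enum_val j).

Lemma sum_enum (G : F -> K) : \sum_(i < #|{: F}|) G (enum_val i) = \sum_(x : F) G x.
Proof. by rewrite -(big_enum_val G). Qed.

Lemma Mk_mul f g : Mk f *m Mk g = Mk (fun t => k3mul (f t) (g t)).
Proof.
apply/matrixP => i j; rewrite !mxE.
under eq_bigr do rewrite !mxE.
rewrite (sum_enum (fun b => PKf f (enum_val i) b * PKf g b (enum_val j))).
rewrite /PKf /k3mul bigA_distr_bigA; apply: eq_bigr => b _; rewrite -big_split.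
by [].
Qed.

Lemma Mk_tr f : \tr (Mk f) = \prod_t tr3 (f t).
Proof.
rewrite /mxtrace (eq_bigr (fun i => PKf f (enum_val i) (enum_val i))); last by move=> i _; rewrite mxE.
rewrite (sum_enum (fun b => PKf f b b)) /PKf /tr3 bigA_distr_bigA.
by [].
Qed.

Lemma Mk_trmx f : (Mk f)^T = Mk (fun t a b => f t b a).
Proof. by apply/matrixP => i j; rewrite !mxE. Qed.

Lemma Mk_ext f g : (forall t a b, f t a b = g t a b) -> Mk f = Mk g.
Proof.
move=> h; apply/matrixP => i j; rewrite !mxE /PKf; apply: eq_bigr => t _; exact: h.
Qed.

Lemma card_F : #|{: F}| = (3 ^ n)%N.
Proof. by rewrite card_ffun !card_ord. Qed.

End Tensor.
Arguments PKf {K n}.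
Arguments Mk {K n}.

Section CS.
Variable K : realFieldType.

Lemma sum_prod (T : finType) (u v : T -> K) :
  \sum_g \sum_h u g * v h = (\sum_g u g) * (\sum_h v h).
Proof. by rewrite mulr_suml; apply: eq_bigr => g _; rewrite mulr_sumr. Qed.

Lemma cauchy_schwarz (T : finType) (a z : T -> K) :
  (\sum_g a g * z g) ^+ 2 <= (\sum_g a g ^+ 2) * (\sum_g z g ^+ 2).
Proof.
have h : 0 <= \sum_g \sum_h (a g * z h - a h * z g) ^+ 2.
  by apply: sumr_ge0 => g _; apply: sumr_ge0 => h _; exact: sqr_ge0.
have e : \sum_g \sum_h (a g * z h - a h * z g) ^+ 2 =
  \sum_g \sum_h (a g ^+ 2 * z h ^+ 2) + \sum_g \sum_h (z g ^+ 2 * a h ^+ 2)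
  - 2 * \sum_g \sum_h ((a g * z g) * (a h * z h)).
  rewrite mulr_sumr -big_split -sumrB /=; apply: eq_bigr => g _.
  rewrite mulr_sumr -big_split -sumrB /=; apply: eq_bigr => h0 _; ring.
move: h; rewrite e !sum_prod expr2; lra.
Qed.
End CS.

Section Core.
Variable K : realFieldType.
Variables (n m : nat) (X : 'I_m -> 'I_n -> 'I_3 -> K).
Hypothesis normX : forall i t, dotv (X i t) (X i t) = 1.
Hypothesis triX : forall i j l : 'I_m, i != j -> i != l -> j != l ->
  exists t, [/\ dotv (X i t) (X j t) = 0, dotv (X i t) (X l t) = 0 &
                dotv (X j t) (X l t) = 0].

Local Notation c i j t := (dotv (X i t) (X j t)).
Definition PX i := Mk (fun t => pk (X i t)).

Lemma PX_sym i : (PX i)^T = PX i.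
Proof. by rewrite /PX Mk_trmx; apply: Mk_ext => t a b; rewrite pk_sym. Qed.

Lemma PX_idem i : PX i *m PX i = PX i.
Proof. by rewrite /PX Mk_mul; apply: Mk_ext => t a b; rewrite pk_idem. Qed.

Lemma PX_van i j l : i != j -> i != l -> j != l -> \tr (PX i *m PX j *m PX l) = 0.
Proof.
move=> ij il jl; have [t [h1 h2 h3]] := triX _ _ _ ij il jl.
rewrite /PX !Mk_mul Mk_tr (bigD1 t) //= tr3_pk3 h1 h2 h3 !normX.
by rewrite (_ : 3 - 1 - 1 - 1 + 0 ^+ 2 + 0 ^+ 2 + 0 ^+ 2 - 0 * 0 * 0 = 0 :> K) ?mul0r //; ring.
Qed.

Lemma trPX i j : \tr (PX i *m PX j) = \prod_t (1 + c i j t ^+ 2).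
Proof.
rewrite /PX Mk_mul Mk_tr; apply: eq_bigr => t _; rewrite tr3_pk2 !normX; ring.
Qed.

Lemma D_le : \sum_i \sum_(j | j != i) \prod_t (1 + c i j t ^+ 2) <= 2 * 3 ^+ n.
Proof.
have := @sos K _ _ PX PX_sym PX_idem PX_van.
under eq_bigr do under eq_bigr do rewrite trPX.
by rewrite card_F natrX.
Qed.


Local Notation FB := {ffun 'I_n -> bool}.
Definition hh (f : FB) i j := \prod_t (if f t then c i j t ^+ 2 else 1).
Definition GG (f : FB) := \sum_i \sum_j hh f i j.

Lemma expand i j : \prod_t (1 + c i j t ^+ 2) = \sum_(f : FB) hh f i j.
Proof.
rewrite /hh -(bigA_distr_bigA (fun t (b : bool) => if b then c i j t ^+ 2 else 1)).
by apply: eq_bigr => t _; rewrite big_bool /= addrC.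
Qed.

Lemma hh_diag f i : hh f i i = 1.
Proof. by rewrite /hh big1 // => t _; rewrite normX expr1n; case: (f t). Qed.

Lemma hh_ge0 f i j : 0 <= hh f i j.
Proof. by rewrite /hh; apply: prodr_ge0 => t _; case: (f t); rewrite ?sqr_ge0. Qed.

Section Feat.
Variable f : FB.
Definition phi i t (g : 'I_3 * 'I_3) : K :=
  if f t then X i t g.1 * X i t g.2 else ((g.1 == ord0) && (g.2 == ord0))%:R.
Definition psi t (g : 'I_3 * 'I_3) : K :=
  if f t then (g.1 == g.2)%:R else ((g.1 == ord0) && (g.2 == ord0))%:R.

Lemma s1 i j t : \sum_g phi i t g * phi j t g = (if f t then c i j t ^+ 2 else 1).
Proof.
rewrite -(pair_bigA _ (fun a b => phi i t (a, b) * phi j t (a, b))) /= sum3 !sum3 /phi /=.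
case: (f t) => /=; last by ring.
rewrite /dotv sum3; ring.
Qed.

Lemma s2 i t : \sum_g psi t g * phi i t g = 1.
Proof.
rewrite -(pair_bigA _ (fun a b => psi t (a, b) * phi i t (a, b))) /= sum3 !sum3 /phi /psi /=.
case: (f t) => /=; last by ring.
apply: (etrans _ (normX i t)); rewrite /dotv sum3; ring.
Qed.

Lemma s3 t : \sum_g psi t g ^+ 2 = (if f t then 3 else 1).
Proof.
rewrite -(pair_bigA _ (fun a b => psi t (a, b) ^+ 2)) /= sum3 !sum3 /psi /=.
by case: (f t) => /=; ring.
Qed.

Local Notation FG := {ffun 'I_n -> 'I_3 * 'I_3}.
Definition Phi i (g : FG) := \prod_t phi i t (g t).
Definition Psi (g : FG) := \prod_t psi t (g t).

Lemma hh_feat i j : hh f i j = \sum_(g : FG) Phi i g * Phi j g.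
Proof.
rewrite /hh; under eq_bigr do rewrite -s1.
rewrite bigA_distr_bigA; apply: eq_bigr => g _; by rewrite /Phi -big_split.
Qed.

Lemma GG_feat : GG f = \sum_(g : FG) (\sum_i Phi i g) ^+ 2.
Proof.
rewrite /GG; under eq_bigr do under eq_bigr do rewrite hh_feat.
under eq_bigr do rewrite exchange_big /=.
rewrite exchange_big /=; apply: eq_bigr => g _.
by rewrite expr2 -sum_prod.
Qed.

Lemma Psi_Phi : \sum_(g : FG) Psi g * (\sum_i Phi i g) = m%:R.
Proof.
under eq_bigr do rewrite mulr_sumr.
rewrite exchange_big /= -[m in RHS]card_ord -sumr_const; apply: eq_bigr => i _.
under eq_bigr do rewrite /Psi /Phi -big_split /=.
by rewrite -(bigA_distr_bigA (fun t g => psi t g * phi i t g)) big1 // => t _; rewrite s2.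
Qed.

Lemma Psi_sq : \sum_(g : FG) Psi g ^+ 2 = \prod_t (if f t then 3 else 1).
Proof.
rewrite (eq_bigr (fun g : FG => \prod_t psi t (g t) ^+ 2)); last by move=> g _; rewrite /Psi prodrXl.
rewrite -(bigA_distr_bigA (fun t g => psi t g ^+ 2)); apply: eq_bigr => t _; exact: s3.
Qed.

Lemma CS_G : m%:R ^+ 2 <= (\prod_t (if f t then 3 else 1)) * GG f.
Proof.
rewrite -Psi_Phi -Psi_sq GG_feat; exact: cauchy_schwarz.
Qed.
End Feat.

Definition cnt (f : FB) := #|[pred t | f t]|.
Definition good (f : FB) := (3 * cnt f <= n)%N.
Definition ww (f : FB) : K := \prod_t (if f t then 3^-1 else 1).

Lemma prod_if (f : FB) (y : K) : \prod_t (if f t then y else 1) = y ^+ cnt f.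
Proof. by rewrite -big_mkcond /= -prodr_const; apply: eq_bigl => t; rewrite inE. Qed.

Lemma sum_if (y : K) : \sum_(f : FB) \prod_t (if f t then y else 1) = (1 + y) ^+ n.
Proof.
rewrite -(bigA_distr_bigA (fun t (b : bool) => if b then y else 1)).
rewrite (eq_bigr (fun _ => 1 + y)); last by move=> t _; rewrite big_bool /= addrC.
by rewrite prodr_const card_ord.
Qed.

Lemma GG_split f : GG f = m%:R + \sum_i \sum_(j | j != i) hh f i j.
Proof.
rewrite /GG -[m in m%:R]card_ord -sumr_const -big_split /=; apply: eq_bigr => i _.
by rewrite (bigD1 i) //= hh_diag.
Qed.

Lemma P3w (f : FB) : (\prod_t (if f t then 3 else 1)) * ww f = 1 :> K.
Proof.
rewrite /ww -big_split /=; apply: big1 => t _; case: (f t) => //; last by rewrite mulr1.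
by rewrite mulfV // pnatr_eq0.
Qed.

Lemma ww_ge0 f : 0 <= ww f.
Proof. by rewrite /ww; apply: prodr_ge0 => t _; case: (f t); rewrite // invr_ge0 ler0n. Qed.

Lemma lower : \sum_(f | good f) (m%:R ^+ 2 * ww f - m%:R) <=
  \sum_i \sum_(j | j != i) \prod_t (1 + c i j t ^+ 2).
Proof.
under [X in _ <= X]eq_bigr do under eq_bigr do rewrite expand.
under [X in _ <= X]eq_bigr do rewrite exchange_big /=.
rewrite exchange_big /= [X in _ <= X](bigID good) /=.
rewrite -[X in X <= _]addr0; apply: lerD; last first.
  by apply: sumr_ge0 => f _; apply: sumr_ge0 => i _; apply: sumr_ge0 => j _; exact: hh_ge0.
apply: ler_sum => f _.
have h1 := CS_G f.
have h2 : m%:R ^+ 2 * ww f <= GG f.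
  have := ler_wpM2r (ww_ge0 f) h1.
  by rewrite [X in _ <= X]mulrAC P3w mul1r.
move: h2; rewrite GG_split; lra.
Qed.

Lemma prod_if_mul (f : FB) (a b : K) :
  \prod_t (if f t then a * b else 1) = \prod_t (if f t then a else 1) * \prod_t (if f t then b else 1).
Proof. by rewrite -big_split /=; apply: eq_bigr => t _; case: (f t); rewrite ?mulr1. Qed.

Lemma A_bound : (1 + 3^-1) ^+ n - (4/5) ^+ n * (1 + 3^-1 * (5/4) ^+ 3) ^+ n
   <= \sum_(f | good f) ww f.
Proof.
have e : \sum_(f : FB) ww f = (1 + 3^-1) ^+ n by rewrite /ww sum_if.
rewrite -e (bigID good) /=.
suff : \sum_(f | ~~ good f) ww f <= (4/5) ^+ n * (1 + 3^-1 * (5/4) ^+ 3) ^+ n by lra.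
rewrite -sum_if mulr_sumr.
apply: (le_trans (y := \sum_(f | ~~ good f) (4/5) ^+ n * \prod_t (if f t then 3^-1 * (5/4) ^+ 3 else 1))).
  apply: ler_sum => f bad; rewrite prod_if_mul -/(ww f) [_ * (ww f * _)]mulrC -mulrA.
  rewrite -[X in X <= _]mulr1; apply: ler_wpM2l; first exact: ww_ge0.
  rewrite prod_if -exprM.
  have h : (5/4 : K) ^+ n <= (5/4) ^+ (3 * cnt f).
    apply: ler_weXn2l; first lra.
    by rewrite /good -ltnNge in bad; exact: ltnW.
  have h2 : (4/5 : K) ^+ n * (5/4) ^+ n = 1 by rewrite -exprMn (_ : 4/5 * (5/4) = 1 :> K) ?expr1n //; field.
  have h3 : 0 <= (4/5 : K) ^+ n by apply: exprn_ge0; lra.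
  by have := ler_wpM2l h3 h; rewrite h2 mulrC.
rewrite [X in _ <= X](bigID good) /= -[X in X <= _]add0r; apply: lerD => //.
apply: sumr_ge0 => f _; apply: mulr_ge0; first (apply: exprn_ge0; lra).
apply: prodr_ge0 => t _; case: (f t) => //; apply: mulr_ge0; first by rewrite invr_ge0 ler0n.
apply: exprn_ge0; lra.
Qed.

Lemma B_bound : \sum_(f | good f) 1 <= (5/4) ^+ n * (1 + (4/5) ^+ 3) ^+ n :> K.
Proof.
rewrite -sum_if mulr_sumr.
apply: (le_trans (y := \sum_(f | good f) (5/4) ^+ n * \prod_t (if f t then (4/5) ^+ 3 else 1))).
  apply: ler_sum => f gd; rewrite prod_if -exprM.
  have h : (4/5 : K) ^+ n <= (4/5) ^+ (3 * cnt f).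
    apply: ler_wiXn2l; [lra | lra | by move: gd; rewrite /good].
  have h2 : (5/4 : K) ^+ n * (4/5) ^+ n = 1 by rewrite -exprMn (_ : 5/4 * (4/5) = 1 :> K) ?expr1n //; field.
  have h3 : 0 <= (5/4 : K) ^+ n by apply: exprn_ge0; lra.
  by have := ler_wpM2l h3 h; rewrite h2.
rewrite [X in _ <= X](bigID good) /= -[X in X <= _]addr0; apply: lerD => //.
apply: sumr_ge0 => f _; apply: mulr_ge0; first (apply: exprn_ge0; lra).
apply: prodr_ge0 => t _; case: (f t) => //; apply: exprn_ge0; lra.
Qed.

Lemma core_ineq : (m%:R : K) ^+ 2 * ((4/3) ^+ n - (317/240) ^+ n) - m%:R * (189/100) ^+ n
   <= 2 * 3 ^+ n.
Proof.
have hD := D_le; have hL := lower.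
have eL : \sum_(f | good f) (m%:R ^+ 2 * ww f - m%:R) =
  m%:R ^+ 2 * \sum_(f | good f) ww f - m%:R * \sum_(f | good f) 1 :> K.
  by rewrite sumrB -!mulr_sumr; congr (_ - _); rewrite mulr_sumr; apply: eq_bigr => f _; rewrite mulr1.
have hA := A_bound; have hB := B_bound.
have c1 : (1 + 3^-1 : K) = 4/3 by field.
have c2 : (4/5 : K) ^+ n * (1 + 3^-1 * (5/4) ^+ 3) ^+ n = (317/240) ^+ n.
  by rewrite -exprMn; congr (_ ^+ _); rewrite !exprS expr0; field.
have c3 : (5/4 : K) ^+ n * (1 + (4/5) ^+ 3) ^+ n = (189/100) ^+ n.
  by rewrite -exprMn; congr (_ ^+ _); rewrite !exprS expr0; field.
rewrite c1 c2 in hA; rewrite c3 in hB.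
have m0 : 0 <= (m%:R : K) by rewrite ler0n.
have m2 : 0 <= (m%:R : K) ^+ 2 by rewrite sqr_ge0.
have t1 := ler_wpM2l m2 hA.
have t2 := ler_wpM2l m0 hB.
move: hL; rewrite eL => hL.
lra.
Qed.

End Core.

Section Bridge.
Definition comp (u : R3) (a : 'I_3) : R :=
  match nat_of_ord a with 0%N => u.1.1 | 1%N => u.1.2 | _ => u.2 end.

Lemma dotv_comp u v : dotv (comp u) (comp v) = dot3 u v.
Proof. by case: u => [[u1 u2] u3]; case: v => [[v1 v2] v3]; rewrite /dotv sum3. Qed.
End Bridge.

Local Open Scope R_scope.
Lemma core_R n (C : word n -> Prop) : vector_trifferent_code n C ->
  forall l, NoDup l -> (forall x, In x l -> C x) ->
  INR (length l) ^ 2 * ((INR 4 / INR 3) ^ n - (INR 317 / INR 240) ^ n)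
  - INR (length l) * (INR 189 / INR 100) ^ n <= INR 2 * INR 3 ^ n.
Proof.
move=> [Hs Ht] l Hnd Hin.
set m := length l.
pose d : word n := fun _ => (0, 0, 0).
pose X := fun (i : 'I_m) (t : 'I_n) => comp (List.nth i l d t).
have Hi : forall i : 'I_m, In (List.nth i l d) l.
  by move=> i; apply: nth_In; apply/ssrnat.ltP; exact: ltn_ord.
have normX : forall i t, dotv (X i t) (X i t) = 1%R.
  by move=> i t; rewrite /X dotv_comp; exact: (Hs _ (Hin _ (Hi i)) t).
have triX : forall i j k : 'I_m, i != j -> i != k -> j != k ->
  exists t, [/\ dotv (X i t) (X j t) = 0%R, dotv (X i t) (X k t) = 0%R &
                dotv (X j t) (X k t) = 0%R].
  move=> i j k ij ik jk.
  have neq : forall a b : 'I_m, a != b -> List.nth a l d <> List.nth b l d.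
    move=> a b ab E; move/negP: ab; apply; apply/eqP; apply: val_inj.
    apply: (proj1 (NoDup_nth l d) Hnd) => //; apply/ssrnat.ltP; exact: ltn_ord.
  have [t [h1 [h2 h3]]] := Ht _ _ _ (Hin _ (Hi i)) (Hin _ (Hi j)) (Hin _ (Hi k))
     (neq _ _ ij) (neq _ _ ik) (neq _ _ jk).
  by exists t; rewrite /X !dotv_comp.
have := @core_ineq R n m X normX triX.
move/RleP.
rewrite -!RpowE -!INRE.
by [].
Qed.

From Stdlib Require Import Field Ring.
Local Open Scope R_scope.

Lemma INRc k : INR k = IZR (Z.of_nat k).
Proof. exact: INR_IZR_INZ. Qed.

Theorem theorem1 :
  forall eps : R, 0 < eps ->
  exists N : nat, forall n : nat, (N <= n)%nat ->
  forall C : word n -> Prop, vector_trifferent_code n C ->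
  forall l : list (word n), NoDup l -> (forall x, In x l -> C x) ->
  INR (length l) <= (sqrt 2 + eps) * (3 / 2) ^ n.
Proof.
intros eps Heps.
set K0 := sqrt 2 + eps.
have Hs2 : sqrt 2 * sqrt 2 = 2 by apply: sqrt_sqrt; Lra.lra.
have Hs0 : 0 <= sqrt 2 by apply: sqrt_pos.
have K0pos : 0 < K0 by rewrite /K0; Lra.lra.
set dl := K0 * K0 - 2.
have dlpos : 0 < dl.
  rewrite /dl /K0.
  have : 0 < 2 * sqrt 2 * eps + eps * eps by Lra.nra.
  Lra.nra.
have [N1 HN1] := pow_lt_1_zero (2853/2880) ltac:(rewrite Rabs_pos_eq; Lra.lra)
  (dl / (2 * (K0 * K0))) ltac:(apply: Rdiv_lt_0_compat; Lra.nra).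
have [N2 HN2] := pow_lt_1_zero (567/600) ltac:(rewrite Rabs_pos_eq; Lra.lra)
  (dl / (2 * K0)) ltac:(apply: Rdiv_lt_0_compat; Lra.nra).
exists (maxn N1 N2) => n Hn C HC l Hnd Hin.
have Hn1 : (n >= N1)%coq_nat by apply/ssrnat.leP; apply: leq_trans Hn; exact: leq_maxl.
have Hn2 : (n >= N2)%coq_nat by apply/ssrnat.leP; apply: leq_trans Hn; exact: leq_maxr.
have H := core_R _ _ HC _ Hnd Hin.
rewrite (INRc 4) (INRc 3) (INRc 317) (INRc 240) (INRc 189) (INRc 100) (INRc 2) /= in H.
set m := INR (length l) in H *.
set q := (3 / 2) ^ n.
set T := 3 ^ n.
set u := (2853/2880) ^ n.
set v := (567/600) ^ n.
have Tpos : 0 < T by apply: pow_lt; Lra.lra.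
have upos : 0 <= u by apply: pow_le; Lra.lra.
have vpos : 0 <= v by apply: pow_le; Lra.lra.
have qpos : 0 < q by apply: pow_lt; Lra.lra.
have hu : u < dl / (2 * (K0 * K0)).
  by have := HN1 n Hn1; rewrite Rabs_pos_eq.
have hv : v < dl / (2 * K0).
  by have := HN2 n Hn2; rewrite Rabs_pos_eq.
have hu' : K0 * K0 * u < dl / 2.
  have := Rmult_lt_compat_l (K0 * K0) _ _ ltac:(Lra.nra) hu.
  by rewrite (_ : K0 * K0 * (dl / (2 * (K0 * K0))) = dl / 2) //; field; Lra.lra.
have hv' : K0 * v < dl / 2.
  have := Rmult_lt_compat_l K0 _ _ K0pos hv.
  by rewrite (_ : K0 * (dl / (2 * K0)) = dl / 2) //; field; Lra.lra.
have E1 : q * q * (4 / 3) ^ n = T.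
  rewrite /q /T -!Rpow_mult_distr; f_equal; field.
have E2 : q * q * (317 / 240) ^ n = T * u.
  rewrite /q /T /u -!Rpow_mult_distr; f_equal; field.
have E3 : q * (189 / 100) ^ n = T * v.
  rewrite /q /T /v -!Rpow_mult_distr; f_equal; field.
apply: Rnot_lt_le => Hgt.
set x := K0 * q in Hgt *.
have xpos : 0 < x by rewrite /x; Lra.nra.
set a := (4 / 3) ^ n - (317 / 240) ^ n.
set b := (189 / 100) ^ n.
have apos : 0 <= a.
  rewrite /a; have : (317 / 240) ^ n <= (4 / 3) ^ n by apply: pow_incr; Lra.lra.
  Lra.lra.
have key : x * x * a - x * b = K0 * K0 * T - K0 * K0 * (T * u) - K0 * (T * v).
  rewrite -E2 -E3 -E1 /x /a /b; ring.
have key2 : x * x * a - x * b > 2 * T.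
  rewrite key.
  have : 0 < T * (dl - K0 * K0 * u - K0 * v) by apply: Rmult_lt_0_compat; Lra.lra.
  rewrite /dl; Lra.nra.
have xab : x * a - b > 0.
  apply: (Rmult_lt_reg_l x) => //; rewrite Rmult_0_r; Lra.nra.
have mx : 0 <= (m - x) * (m * a + x * a - b).
  apply: Rmult_le_pos; Lra.nra.
have : m * (m * 1) * a - m * b <= 2 * T by rewrite /a /b /T; Lra.lra.
simpl; Lra.nra.
Qed.
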